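(* Let $m\ge0$. Let $B_m(\mathbb C)$ (resp. $B_m(\mathbb R)$) act on the space $\mathrm{Her}_m(\mathbb C)$ of $m\times m$ Hermitian matrices (resp. the space $\mathrm{Sym}_m(\mathbb R)$ of real symmetric matrices) by $b\cdot z=bzb^*$ (resp. $b\cdot z=bzb^t$). Then the maps $\tau\mapsto B_m(\mathbb C)\cdot\tau$ and $\tau\mapsto B_m(\mathbb R)\cdot\tau$ are bijections $$\mathrm{SPI}^+_m\xrightarrow{\sim}B_m(\mathbb C)\backslash\mathrm{Her}_m(\mathbb C),\qquad \mathrm{SPI}^+_m\xrightarrow{\sim}B_m(\mathbb R)\backslash\mathrm{Sym}_m(\mathbb R);$$ i.e. $\mathrm{SPI}^+_m$ is a complete system of representatives for both orbit spaces.
   Context: $B_m(\mathbb C)$, $B_m(\mathbb R)$ denote the groups of invertible upper triangular complex, resp. real, $m\times m$ matrices. A signed partial permutation is an $m\times m$ integer matrix with entries in $\{-1,0,1\}$ and at most one nonzero entry in each row and in each column. $\mathrm{SPI}_m$ (signed partial involutions) is the set of symmetric signed partial permutations, and $\mathrm{SPI}^+_m\subset\mathrm{SPI}_m$ is the subset of those whose off-diagonal entries are all nonnegative. *)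

(* Defs.v *)
(* The reals are an arbitrary [R : realType] (complete
   archimedean ordered field, i.e. R up to iso); C := R[i] (real_closed's complex). *)
From HB Require Import structures.
From mathcomp Require Import all_boot all_order all_algebra.
From mathcomp Require Import reals.
From mathcomp Require Import complex.
Set Implicit Arguments. Unset Strict Implicit. Unset Printing Implicit Defensive.
Import Order.TTheory GRing.Theory Num.Theory.
Local Open Scope ring_scope.

Definition borel (F : comUnitRingType) (m : nat) (b : 'M[F]_m) : Prop :=
  (forall i j : 'I_m, (j < i)%N -> b i j = 0) /\ b \in unitmx.

Definition signed_partial_perm (m : nat) (t : 'M[int]_m) : Prop :=
  (forall i j : 'I_m, t i j \in [:: -1; 0; 1]) /\
  (forall i j j' : 'I_m, t i j != 0 -> t i j' != 0 -> j = j') /\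
  (forall i i' j : 'I_m, t i j != 0 -> t i' j != 0 -> i = i').

Definition SPI (m : nat) (t : 'M[int]_m) : Prop :=
  signed_partial_perm t /\ t^T = t.

Definition SPIplus (m : nat) (t : 'M[int]_m) : Prop :=
  SPI t /\ (forall i j : 'I_m, i != j -> 0 <= t i j).

Definition adjC (R : rcfType) (m n : nat) (A : 'M[R[i]]_(m, n)) : 'M[R[i]]_(n, m) :=
  (map_mx (@conjc R) A)^T.

Definition is_hermitianC (R : rcfType) (m : nat) (z : 'M[R[i]]_m) : Prop :=
  adjC z = z.

Definition real_symmetric (R : realType) (m : nat) (z : 'M[R]_m) : Prop :=
  z^T = z.

Definition intmx (F : pzRingType) (m : nat) (t : 'M[int]_m) : 'M[F]_m :=
  map_mx (fun k : int => k%:~R) t.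

Definition actC (R : rcfType) (m : nat) (b z : 'M[R[i]]_m) := b *m z *m adjC b.
Definition actR (R : realType) (m : nat) (b z : 'M[R]_m) := b *m z *m b^T.

Definition same_orbitC (R : rcfType) (m : nat) (x y : 'M[R[i]]_m) : Prop :=
  exists b, borel b /\ actC b x = y.
Definition same_orbitR (R : realType) (m : nat) (x y : 'M[R]_m) : Prop :=
  exists b, borel b /\ actR b x = y.

(* Main.v *)
Require Import Defs.
From HB Require Import structures.
From mathcomp Require Import all_boot all_order all_algebra.
From mathcomp Require Import reals.
From mathcomp Require Import complex.
From mathcomp Require Import ring lra.
Set Implicit Arguments. Unset Strict Implicit. Unset Printing Implicit Defensive.
Import Order.TTheory GRing.Theory Num.Theory.
Local Open Scope ring_scope.
Lemma sign_eq (F : numFieldType) (s t p : F) : 0 < p -> (s = 0 \/ s = 1 \/ s = -1) ->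
  (t = 0 \/ t = 1 \/ t = -1) -> t = s * p -> s = t.
Proof.
move=> pp; case=> [->|[->|->]]; case=> [->|[->|->]]; rewrite ?mul0r ?mul1r ?mulN1r // => h; exfalso.
all: first [ by move/eqP: h; rewrite ?oppr_eq0 oner_eq0
           | by move: pp; rewrite -h ltxx
           | by move: pp; rewrite -h oppr_gt0 ltr10
           | by move: pp; rewrite -[p]opprK -h oppr0 ltxx
           | by move: pp; rewrite -[p]opprK -h oppr_gt0 ltr10
           | by move: pp; rewrite -[p]opprK -h opprK oppr_gt0 ltr10 ].
Qed.

Section Gen.
Variable F : numFieldType.
Variable cj : {rmorphism F -> F}.
Hypothesis cjK : involutive cj.

Definition adj m n (A : 'M[F]_(m, n)) : 'M[F]_(n, m) := (map_mx cj A)^T.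

Lemma adjE m n (A : 'M[F]_(m, n)) i j : adj A i j = cj (A j i).
Proof. by rewrite !mxE. Qed.

Lemma adjK m n (A : 'M[F]_(m, n)) : adj (adj A) = A.
Proof. by apply/matrixP=> i j; rewrite !adjE cjK. Qed.

Lemma adjM m n p (A : 'M[F]_(m, n)) (B : 'M[F]_(n, p)) : adj (A *m B) = adj B *m adj A.
Proof. by rewrite /adj map_mxM trmx_mul. Qed.

Lemma adjD m n (A B : 'M[F]_(m, n)) : adj (A + B) = adj A + adj B.
Proof. by apply/matrixP=> i j; rewrite !mxE rmorphD. Qed.

Lemma adjN m n (A : 'M[F]_(m, n)) : adj (- A) = - adj A.
Proof. by apply/matrixP=> i j; rewrite !mxE rmorphN. Qed.

Lemma adj0 m n : adj (0 : 'M[F]_(m, n)) = 0.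
Proof. by apply/matrixP=> i j; rewrite !mxE rmorph0. Qed.

Lemma adjZ m n a (A : 'M[F]_(m, n)) : adj (a *: A) = cj a *: adj A.
Proof. by apply/matrixP=> i j; rewrite !mxE rmorphM. Qed.

Lemma adj_scalar n a : adj (a%:M : 'M[F]_n) = (cj a)%:M.
Proof. by apply/matrixP=> i j; rewrite !mxE eq_sym; case: eqP; rewrite ?rmorph0 ?rmorphMn. Qed.

Lemma adj1 n : adj (1%:M : 'M[F]_n) = 1%:M.
Proof. by rewrite adj_scalar rmorph1. Qed.

Lemma adj_delta m n (i : 'I_m) (j : 'I_n) : adj (delta_mx i j) = delta_mx j i.
Proof. by apply/matrixP=> a b; rewrite !mxE; case: (_ == _); case: (_ == _); rewrite ?rmorph0 ?rmorph1. Qed.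

Lemma adj_block m1 m2 n1 n2 (a : 'M[F]_(m1, n1)) (b : 'M[F]_(m1, n2))
  (c : 'M[F]_(m2, n1)) (d : 'M[F]_(m2, n2)) :
  adj (block_mx a b c d) = block_mx (adj a) (adj c) (adj b) (adj d).
Proof. by rewrite /adj map_block_mx tr_block_mx. Qed.

Definition upper n (b : 'M[F]_n) := forall i j : 'I_n, (j < i)%N -> b i j = 0.

Lemma upper_trig n (b : 'M[F]_n) : upper b <-> is_trig_mx b^T.
Proof.
split=> [H|/is_trig_mxP H]; first by apply/is_trig_mxP=> i j lt; rewrite mxE H.
by move=> i j lt; have := H j i lt; rewrite mxE.
Qed.

Lemma upper_block n (a : 'M[F]_1) (r : 'M[F]_(1, n)) c (B : 'M[F]_n) :
  upper (block_mx a r c B) <-> c = 0 /\ upper B.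
Proof.
rewrite upper_trig tr_block_mx is_trig_block_mx // mx11_is_trig trmx_eq0 (upper_trig B).
split; first by case/andP=> /eqP -> ?.
by case=> -> ?; rewrite eqxx.
Qed.

Lemma borel_block n (a : 'M[F]_1) (r : 'M[F]_(1, n)) (B : 'M[F]_n) :
  borel (block_mx a r 0 B) <-> a 0 0 != 0 /\ borel B.
Proof.
rewrite /borel -/(upper _) -/(upper B) upper_block !unitmxE det_ublock unitrM det_mx11 !unitfE.
split; first by case=> [[_ ?] /andP[? ?]].
by case=> ? [? ?]; split=> //; apply/andP.
Qed.

Lemma borel_diag n (b : 'M[F]_n) i : borel b -> b i i != 0.
Proof.
case=> /upper_trig ut; rewrite unitmxE unitfE -det_tr det_trig //.
move/prodf_neq0 => H; have := H i isT; by rewrite mxE.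
Qed.

Lemma borel1 n : borel (1%:M : 'M[F]_n).
Proof. split; last exact: unitmx1. by move=> i j lt; rewrite mxE; case: eqP => // eij; rewrite eij ltnn in lt. Qed.

Lemma borelM n (b c : 'M[F]_n) : borel b -> borel c -> borel (b *m c).
Proof.
case=> ub Ub [uc Uc]; split; last by rewrite unitmx_mul Ub Uc.
move=> i j lt; rewrite mxE big1 // => k _.
case: (ltnP k i) => [ki|ik]; first by rewrite ub ?mul0r.
by rewrite uc ?mulr0 // (leq_trans lt ik).
Qed.

Lemma blockE n (b : 'M[F]_(1 + n)) :
  b = block_mx (ulsubmx b) (ursubmx b) (dlsubmx b) (drsubmx b).
Proof. by rewrite submxK. Qed.

Lemma borelV n (b : 'M[F]_n) : borel b -> borel (invmx b).
Proof.
elim: n b => [|n IH] b bb.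
  by split; [move=> [] | rewrite unitmx_inv; case: bb].
move: b bb; rewrite -[n.+1]/(1 + n) => b bb.
have Ub := bb.2.
suff [c [uc bc]] : exists c, upper c /\ b *m c = 1%:M.
  have -> : invmx b = c by rewrite -[c](mulKmx Ub) bc mulmx1.
  by split => //; have [] := mulmx1_unit bc.
have bb' := bb; move: bb; rewrite [b]blockE.
set a := ulsubmx b; set r := ursubmx b; set B := drsubmx b.
have -> : dlsubmx b = 0.
  by have := bb'.1; rewrite {1}[b]blockE => /upper_block [].
case/borel_block => a0 bB.
have [uC UC] := IH _ bB.
exists (block_mx (a 0 0)^-1%:M (- ((a 0 0)^-1 *: (r *m invmx B))) 0 (invmx B)).
split; first by apply/upper_block.
rewrite mulmx_block !mulmx0 !mul0mx !addr0 !add0r mulmxV; last by case: bB.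
set al := a 0 0 in a0 *.
rewrite [a]mx11_scalar -/al !mul_scalar_mx scale_scalar_mx divff //.
by rewrite scalerN scalerA divff // scale1r addNr -scalar_mx_block.
Qed.

Definition cong n (z z' : 'M[F]_n) := exists b, borel b /\ b *m z *m adj b = z'.

Lemma cong_refl n (z : 'M[F]_n) : cong z z.
Proof. by exists 1%:M; split; [exact: borel1 | rewrite mul1mx adj1 mulmx1]. Qed.

Lemma cong_trans n (x y z : 'M[F]_n) : cong x y -> cong y z -> cong x z.
Proof.
case=> b1 [B1 E1] [b2 [B2 E2]]; exists (b2 *m b1); split; first exact: borelM.
by rewrite -E2 -E1 adjM !mulmxA.
Qed.

Lemma cong_sym n (x y : 'M[F]_n) : cong x y -> cong y x.
Proof.
case=> b [Bb E]; exists (invmx b); split; first exact: borelV.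
have Ub := Bb.2.
by rewrite -E !mulmxA mulVmx // mul1mx -mulmxA -adjM mulVmx // adj1 mulmx1.
Qed.

Lemma herm_cong n (b z : 'M[F]_n) : adj z = z -> adj (b *m z *m adj b) = b *m z *m adj b.
Proof. by move=> hz; rewrite !adjM adjK hz mulmxA. Qed.

Lemma herm_block n (z : 'M[F]_(1 + n)) : adj z = z ->
  [/\ z = block_mx (ulsubmx z) (adj (dlsubmx z)) (dlsubmx z) (drsubmx z),
      adj (ulsubmx z) = ulsubmx z & adj (drsubmx z) = drsubmx z].
Proof.
move=> hz; have E := blockE z.
have := hz; rewrite {1}E adj_block => /esym; rewrite {1}E.
case/eq_block_mx => h1 h2 h3 h4.
by split; rewrite -?h1 -?h4 // -h2.
Qed.

Lemma block_cong n (a : 'M[F]_1) r (B : 'M[F]_n) d w A : adj A = A ->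
 block_mx a r 0 B *m block_mx d (adj w) w A *m adj (block_mx a r 0 B) =
 block_mx ((a *m d + r *m w) *m adj a + (a *m adj w + r *m A) *m adj r)
  (adj (B *m w *m adj a + B *m A *m adj r)) (B *m w *m adj a + B *m A *m adj r)
  (B *m A *m adj B).
Proof.
move=> hA; rewrite adj_block adj0 !mulmx_block !mul0mx ?add0r ?mulmx0 ?addr0 ?add0r.
congr block_mx; by rewrite adjD !adjM !adjK hA !mulmxA mulmxDl.
Qed.

Definition spip n (S : 'M[F]_n) :=
  [/\ forall i j, S i j = 0 \/ S i j = 1 \/ (i = j /\ S i j = -1),
      forall i j j', S i j != 0 -> S i j' != 0 -> j = j' & S^T = S].

Lemma spip_sym n (S : 'M[F]_n) i j : spip S -> S j i = S i j.
Proof. by case=> _ _ h; have := congr1 (fun M : 'M[F]_n => M i j) h; rewrite mxE. Qed.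

Lemma spip_col n (S : 'M[F]_n) i i' j : spip S -> S i j != 0 -> S i' j != 0 -> i = i'.
Proof. move=> sS; rewrite -!(spip_sym i) -?(spip_sym i') //; case: sS => _ h _; exact: h. Qed.

Lemma spip_adj n (S : 'M[F]_n) : spip S -> adj S = S.
Proof.
move=> sS; apply/matrixP=> i j; rewrite adjE (spip_sym _ _ sS).
by case: sS => [h _ _]; case: (h i j) => [->|[->|[_ ->]]]; rewrite ?rmorph0 ?rmorph1 ?rmorphN1.
Qed.

Lemma spip_sq n (S : 'M[F]_n) i j : spip S -> S i j != 0 -> S i j * S i j = 1.
Proof.
by case=> h _ _; case: (h i j) => [->|[->|[_ ->]]]; rewrite ?eqxx ?mulr1 ?mulrNN ?mulr1.
Qed.

Lemma spip_row0 n (S : 'M[F]_n) k : row k S = 0 -> forall j, S k j = 0.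
Proof. by move=> Z j; have := congr1 (fun M : 'M[F]_(1, n) => M 0 j) Z; rewrite !mxE. Qed.

Lemma spip_col0 n (S : 'M[F]_n) k : spip S -> row k S = 0 -> col k S = 0.
Proof.
move=> sS Z; apply/matrixP=> i j; rewrite !mxE (spip_sym _ _ sS).
exact: spip_row0.
Qed.

Lemma spip_SSv n (S : 'M[F]_n) (v : 'cV[F]_n) : spip S ->
  v - S *m (S *m v) = \col_i (if row i S == 0 then v i 0 else 0).
Proof.
move=> sS; apply/matrixP => i b; rewrite (ord1 b) !mxE.
case: eqP => [Z|NZ].
  by rewrite big1 ?subr0 // => l _; rewrite (spip_row0 Z) mul0r.
case: (pickP (fun l => S i l != 0)) => [l0 Hl0|H0]; last first.
  exfalso; apply: NZ; apply/matrixP => a l; rewrite (ord1 a) !mxE.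
  by move/negbFE/eqP: (H0 l).
rewrite (bigD1 l0) //= big1 ?addr0; last first.
  move=> l /negbTE nl; case: (eqVneq (S i l) 0) => [->|Sl]; first by rewrite mul0r.
  by case: sS => _ h _; have := h _ _ _ Hl0 Sl => e; rewrite e eqxx in nl.
rewrite !mxE (bigD1 i) //= big1 ?addr0; last first.
  move=> j /negbTE nj; case: (eqVneq (S l0 j) 0) => [->|Sl]; first by rewrite mul0r.
  rewrite (spip_sym _ _ sS) in Sl.
  by have := spip_col sS Sl Hl0 => e; rewrite e eqxx in nj.
rewrite (spip_sym _ _ sS) mulrA spip_sq ?mul1r ?subrr //.
by rewrite (spip_sym _ _ sS).
Qed.

Lemma reduce n (S : 'M[F]_n) (w : 'cV[F]_n) : spip S ->
  exists C r, [/\ borel C, C *m S *m adj C = S &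
   (C *m w + S *m r = 0 \/ exists k c, [/\ c != 0, row k S = 0 &
        C *m w + S *m r = c *: delta_mx k 0])].
Proof.
move=> sS.
pose P := fun i => (row i S == 0) && (w i 0 != 0).
case: (pickP P) => [i0 Pi0 | noP]; last first.
  exists 1%:M, (- (S *m w)); split; first exact: borel1.
    by rewrite mul1mx adj1 mulmx1.
  left; rewrite mul1mx mulmxN spip_SSv //.
  apply/matrixP=> i b; rewrite !mxE; case: ifP => // Z.
  by have := noP i; rewrite /P Z /= => /negbFE/eqP.
case: (arg_maxnP (fun i : 'I_n => (i : nat)) Pi0) => k /andP[/eqP Zk wk] maxk.
pose x : 'cV[F]_n := \col_i (if (row i S == 0) && (i < k)%N then - (w i 0 / w k 0) else 0).
pose C := 1%:M + x *m delta_mx 0 k.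
have xk : delta_mx (0 : 'I_1) k *m x = 0.
  by rewrite -rowE; apply/matrixP => a b; rewrite !mxE ltnn andbF.
have Cinv : C *m (1%:M - x *m delta_mx 0 k) = 1%:M.
  rewrite mulmxBr mulmx1 /C mulmxDl mul1mx -[x *m _ *m _]mulmxA (mulmxA _ x) xk mul0mx mulmx0 addr0.
  by rewrite addrK.
have uC : upper C.
  move=> i j lt; rewrite !mxE big_ord1 !mxE.
  case: eqP => [eij|_]; first by rewrite eij ltnn in lt.
  case: (eqVneq j k) => [ejk|]; last by rewrite andbF mulr0 addr0.
  by rewrite -ejk ltnNge (ltnW lt) andbF mul0r addr0.
have CS : C *m S = S by rewrite /C mulmxDl mul1mx -mulmxA -rowE Zk mulmx0 addr0.
have SC : S *m adj C = S.
  rewrite /C adjD adj1 adjM adj_delta mulmxDr mulmx1 mulmxA -colE.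
  by rewrite spip_col0 // mul0mx addr0.
exists C, (- (S *m (C *m w))); split.
- by split=> //; case: (mulmx1_unit Cinv).
- by rewrite CS SC.
right; exists k, (w k 0); split=> //.
have Cw : C *m w = \col_i (w i 0 + x i 0 * w k 0).
  apply/matrixP => i b; rewrite (ord1 b) /C mulmxDl mul1mx -mulmxA -rowE.
  by rewrite !mxE big_ord1 !mxE.
rewrite mulmxN spip_SSv // Cw.
apply/matrixP => i b; rewrite (ord1 b) !mxE eqxx andbT.
case: (eqVneq (row i S) 0) => [Zi|NZi] /=; last first.
  by case: eqP => [eik|]; [rewrite eik Zk eqxx in NZi | rewrite mulr0].
case: (ltngtP i k) => [ik|ki|eik].
- by rewrite -val_eqE /= (ltn_eqF ik) mulr0 mulNr divfK // subrr.
- rewrite -val_eqE /= (gtn_eqF ki) mulr0 mul0r addr0.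
  apply/eqP; apply: contraTT ki => wi; rewrite -leqNgt.
  by apply: maxk; rewrite /P Zi eqxx.
- have -> : i = k by apply/val_inj.
  by rewrite eqxx mul0r addr0 mulr1.
Qed.

Ltac bsimpl := rewrite ?block_mxEul ?block_mxEur ?block_mxEdl ?block_mxEdr.

Lemma spip_blockA n (S : 'M[F]_n) (s : F) : spip S -> (s = 0 \/ s = 1 \/ s = -1) ->
  spip (block_mx s%:M 0 0 S : 'M_(1 + n)).
Proof.
case=> [hv hu hs] hs0; split.
- move=> i j; case: (split_ordP i) => i' ->; case: (split_ordP j) => j' ->; bsimpl;
    rewrite ?mxE ?eqxx ?mulr1n //; try by left.
  + by rewrite (ord1 i') (ord1 j') eqxx mulr1n; case: hs0 => [->|[->|->]]; auto.
  + by case: (hv i' j') => [->|[->|[-> ->]]]; auto.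
- move=> i j j'; case: (split_ordP i) => i' ->; case: (split_ordP j) => j0 ->;
    case: (split_ordP j') => j1 ->; bsimpl; rewrite ?mxE ?eqxx //.
  + by rewrite (ord1 j0) (ord1 j1).
  + by move=> a b; congr rshift; exact: hu a b.
- by rewrite tr_block_mx !trmx0 tr_scalar_mx hs.
Qed.

Lemma natb_neq0 (b : bool) : (b%:R != 0 :> F) = b.
Proof. by case: b; rewrite ?oner_eq0 ?eqxx. Qed.

Lemma spip_blockB n (S : 'M[F]_n) k : spip S -> row k S = 0 ->
  spip (block_mx 0 (delta_mx 0 k) (delta_mx k 0) S : 'M_(1 + n)).
Proof.
move=> sS Zk; have Zk' := spip_row0 Zk; case: sS => [hv hu hs]; split.
- move=> i j; case: (split_ordP i) => i' ->; case: (split_ordP j) => j' ->; bsimpl;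
    rewrite ?mxE ?eqxx //; try by left.
  + by case: (_ && _); auto.
  + by case: (_ && _); auto.
  + by case: (hv i' j') => [->|[->|[-> ->]]]; auto.
- move=> i j j'; case: (split_ordP i) => i' ->; case: (split_ordP j) => j0 ->;
    case: (split_ordP j') => j1 ->; bsimpl; rewrite ?mxE ?eqxx //.
  all: rewrite ?natb_neq0.
  + by move=> /andP[_ /eqP->] /andP[_ /eqP->].
  + by rewrite (ord1 j0) (ord1 j1).
  + by move=> /andP[/eqP-> _]; rewrite Zk' eqxx.
  + by move=> H /andP[/eqP e _]; rewrite e Zk' eqxx in H.
  + by move=> a b; congr rshift; exact: hu a b.
- by rewrite tr_block_mx !trmx0 !trmx_delta hs.
Qed.

Lemma spip_block_inv n (M : 'M[F]_(1 + n)) : spip M ->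
 [/\ spip (drsubmx M),
     M = block_mx (ulsubmx M) (adj (dlsubmx M)) (dlsubmx M) (drsubmx M) &
   (dlsubmx M = 0 /\ exists s, (s = 0 \/ s = 1 \/ s = -1) /\ ulsubmx M = s%:M) \/
   (exists k, [/\ dlsubmx M = delta_mx k 0, row k (drsubmx M) = 0 & ulsubmx M = 0])].
Proof.
move=> sM; have [E _ _] := herm_block (spip_adj sM).
have sM' := sM; case: sM' => [hv hu hs].
pose l0 := lshift n (0 : 'I_1).
split=> //.
- split.
  + move=> i j; rewrite !mxE.
    case: (hv (rshift 1 i) (rshift 1 j)) => [->|[->|[e ->]]]; auto.
    by right; right; split=> //; exact: rshift_inj e.
  + by move=> i j j'; rewrite !mxE => a b; exact: rshift_inj (hu _ _ _ a b).
  + by apply/matrixP => i j; rewrite !mxE; apply: spip_sym sM.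
case: (pickP (fun k => dlsubmx M k 0 != 0)) => [k Hk | H0]; last first.
  left; split.
    by apply/matrixP => i b; rewrite (ord1 b); move/negbFE/eqP: (H0 i) => ->; rewrite mxE.
  exists (M l0 l0); split; last by rewrite [LHS]mx11_scalar; congr scalar_mx; rewrite !mxE.
  by case: (hv l0 l0) => [->|[->|[_ ->]]]; auto.
right; exists k.
have Mk : M (rshift 1 k) l0 != 0 by move: Hk; rewrite !mxE.
have M1 : M (rshift 1 k) l0 = 1.
  case: (hv (rshift 1 k) l0) => [e|[//|[e _]]]; first by rewrite e eqxx in Mk.
  by move/eqP: e; rewrite eq_rlshift.
have Mk' : M l0 (rshift 1 k) != 0 by rewrite (spip_sym (rshift 1 k) l0 sM).
split.
- apply/matrixP => i b; rewrite (ord1 b) !mxE eqxx andbT.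
  case: (eqVneq i k) => [->|nik]; first by rewrite -/l0 M1.
  apply/eqP; apply: contraT => nz.
  by have := spip_col sM nz Mk => /rshift_inj e; rewrite e eqxx in nik.
- apply/matrixP => a j; rewrite !mxE; apply/eqP; apply: contraT => nz.
  by have := hu _ _ _ Mk nz => /eqP; rewrite eq_lrshift.
- apply/matrixP => a b; rewrite (ord1 a) (ord1 b) !mxE; apply/eqP; apply: contraT => nz.
  by have := hu _ _ _ nz Mk' => /eqP; rewrite eq_lrshift.
Qed.

Hypothesis cjN : forall x : F, x != 0 -> 0 < x * cj x.
Hypothesis cjS : forall x : F, cj x = x -> x != 0 ->
  exists s, s * x * cj s = 1 \/ s * x * cj s = -1.

Lemma cj_eq0 x : (cj x == 0) = (x == 0).
Proof.
apply/eqP/eqP => [h|->]; last exact: rmorph0.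
by rewrite -[x]cjK h rmorph0.
Qed.

Lemma d00 : delta_mx 0 0 = 1%:M :> 'M[F]_1.
Proof. by apply/matrixP => i j; rewrite (ord1 i) (ord1 j) !mxE. Qed.

Lemma adj_scalar_eq (a : F) : adj (a%:M : 'M_1) = a%:M -> cj a = a.
Proof. by rewrite adj_scalar => /matrixP /(_ 0 0); rewrite !mxE eqxx !mulr1n. Qed.

Lemma exist_red n (z : 'M[F]_n) : adj z = z -> exists T, spip T /\ cong z T.
Proof.
elim: n z => [|n IH] z hz.
  exists z; split; last exact: cong_refl.
  by split; [move=> [] | move=> [] | apply/matrixP => -[]].
move: z hz; rewrite -[n.+1]/(1 + n) => z hz.
have [Ez hd hA] := herm_block hz.
set d := ulsubmx z in Ez hd; set w := dlsubmx z in Ez; set A := drsubmx z in Ez hA.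
have [S [sS [B [bB BA]]]] := IH A hA.
have hS := spip_adj sS.
have one1 : (1%:M : 'M[F]_1) 0 0 != 0 by rewrite mxE eqxx mulr1n oner_neq0.
pose b1 : 'M[F]_(1 + n) := block_mx 1%:M 0 0 B.
have c1 : cong z (b1 *m z *m adj b1) by exists b1; split => //; apply/borel_block.
have [d1 Ez1] : exists d1, b1 *m z *m adj b1 = block_mx d1 (adj (B *m w)) (B *m w) S.
  eexists; rewrite /b1 Ez block_cong // adj1 adj0 !mulmx1 !mulmx0 !addr0 BA; reflexivity.
have hz1 : adj (b1 *m z *m adj b1) = b1 *m z *m adj b1 by apply: herm_cong.
have [C [r [bC CSC hv]]] := reduce (B *m w) sS.
pose b2 : 'M[F]_(1 + n) := block_mx 1%:M (adj r *m C) 0 C.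
set z1 := b1 *m z *m adj b1 in c1 Ez1 hz1.
have c2 : cong z (b2 *m z1 *m adj b2).
  by apply: (cong_trans c1); exists b2; split => //; apply/borel_block.
have hz2 : adj (b2 *m z1 *m adj b2) = b2 *m z1 *m adj b2 by apply: herm_cong.
set z2 := b2 *m z1 *m adj b2 in c2 hz2.
set v := C *m (B *m w) + S *m r.
have [Ez2 hd2 _] := herm_block hz2.
have dl2 : dlsubmx z2 = v.
  rewrite /z2 Ez1 block_cong // block_mxKdl adj1 mulmx1 adjM adjK.
  by rewrite [C *m S *m _]mulmxA CSC.
have dr2 : drsubmx z2 = S by rewrite /z2 Ez1 block_cong // block_mxKdr CSC.
rewrite dl2 dr2 in Ez2.
set d2 := ulsubmx z2 in Ez2 hd2.
rewrite [d2]mx11_scalar in Ez2 hd2; set dl := d2 0 0 in Ez2 hd2.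
have cjd := adj_scalar_eq hd2.
case: hv => [v0 | [k [c [c0 Zk vE]]]].
- rewrite -/v in v0; rewrite v0 adj0 in Ez2.
  case: (eqVneq dl 0) => [dl0|dlN0].
    exists z2; split => //; rewrite Ez2 dl0; apply: spip_blockA => //; auto.
  have [s hs] := cjS cjd dlN0.
  have s0 : s != 0.
    by apply/eqP => s0; move: hs; rewrite s0 !mul0r; case=> /esym/eqP; rewrite ?oppr_eq0 oner_eq0.
  pose b3 : 'M[F]_(1 + n) := block_mx s%:M 0 0 1%:M.
  exists (b3 *m z2 *m adj b3); split; last first.
    apply: (cong_trans c2); exists b3; split => //; apply/borel_block; split; last exact: borel1.
    by rewrite mxE eqxx mulr1n.
  rewrite Ez2 -adj0 block_cong // !adj0 !mulmx0 !mul0mx !addr0 mul1mx adj1 mulmx1 adj_scalar.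
  rewrite !mul_scalar_mx !scale_scalar_mx -scalar_mxM adj0.
  by apply: spip_blockA => //; case: hs => ->; auto.
- rewrite -/v in vE; rewrite vE in Ez2.
  pose be := cj (c^-1); pose ga := - (dl / 2%:R) / c.
  pose rh : 'M[F]_(1, n) := (be * ga) *: delta_mx 0 k.
  pose b3 : 'M[F]_(1 + n) := block_mx be%:M rh 0 1%:M.
  have be0 : be != 0 by rewrite cj_eq0 invr_eq0.
  exists (b3 *m z2 *m adj b3); split; last first.
    apply: (cong_trans c2); exists b3; split => //; apply/borel_block; split; last exact: borel1.
    by rewrite mxE eqxx mulr1n.
  have Sr : S *m adj rh = 0 by rewrite adjZ adj_delta -scalemxAr -colE spip_col0 // scaler0.
  have rS : rh *m S = 0 by rewrite -scalemxAl -rowE Zk scaler0.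
  have cjb : cj be * c = 1 by rewrite cjK mulVf.
  rewrite Ez2 block_cong // !mul1mx adj1 mulmx1 Sr rS addr0.
  have dlv : c *: delta_mx k (0 : 'I_1) *m adj (be%:M : 'M_1) = delta_mx k 0.
    by rewrite adj_scalar mul_mx_scalar scalerA cjb scale1r.
  have ul0 : ((be%:M : 'M_1) *m dl%:M + rh *m (c *: delta_mx k 0)) *m adj (be%:M : 'M_1) +
     (be%:M : 'M_1) *m adj (c *: delta_mx k (0 : 'I_1)) *m adj rh = 0.
    rewrite /rh !adjZ !adj_delta adj_scalar -!scalemxAl -!scalemxAr !mul_delta_mx d00.
    rewrite -scalemxAl -mulmxA mul_delta_mx d00 mulmx1 scalemx1 !scale_scalar_mx.
    rewrite -!scalar_mxM -raddfD -scalar_mxM -raddfD.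
    have H0 : forall x : F, x = 0 -> (x%:M : 'M_1) = 0 by move=> x ->; rewrite raddf0.
    apply: H0.
    rewrite /ga !rmorphM !rmorphN fmorph_div rmorph_nat cjd.
    by rewrite fmorphV; field; rewrite cjK cj_eq0 c0.
  rewrite addr0 dlv ul0 adj_delta; exact: spip_blockB.
Qed.

Lemma uniq_red n (b T1 T2 : 'M[F]_n) : borel b -> spip T1 -> spip T2 ->
  b *m T1 *m adj b = T2 -> T1 = T2.
Proof.
elim: n b T1 T2 => [|n IH] b T1 T2 bb s1 s2 E.
  by apply/matrixP => -[].
move: b T1 T2 bb s1 s2 E; rewrite -[n.+1]/(1 + n) => b T1 T2 bb s1 s2 E.
have [sA1 E1 c1] := spip_block_inv s1.
have [sA2 E2 c2] := spip_block_inv s2.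
have Eb := blockE b.
have dlb : dlsubmx b = 0 by have := bb.1; rewrite {1}Eb => /upper_block [].
have [a0 bB] : ulsubmx b 0 0 != 0 /\ borel (drsubmx b).
  by have := bb; rewrite {1}Eb dlb => /borel_block.
move: E; rewrite Eb dlb E1 E2 block_cong ?(spip_adj sA1) //.
move: c1 c2 E1 E2 sA1 sA2.
set a := ulsubmx b; set r := ursubmx b; set B := drsubmx b.
set d1 := ulsubmx T1; set w1 := dlsubmx T1; set A1 := drsubmx T1.
set d2 := ulsubmx T2; set w2 := dlsubmx T2; set A2 := drsubmx T2.
move=> c1 c2 E1 E2 sA1 sA2 /eq_block_mx [eul _ edl edr].
have eA := IH _ _ _ bB sA1 sA2 edr.
rewrite -eA in c2 edr.
have UB := bB.2.
have key : forall k, row k A1 = 0 -> (B *m A1 *m adj r) k 0 = 0.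
  move=> k Zk.
  have : row k (B *m A1) = 0.
    have -> : row k (B *m A1) = row k (B *m A1 *m adj B) *m adj (invmx B).
      by rewrite -row_mul -mulmxA -adjM mulVmx // adj1 mulmx1.
    by rewrite edr Zk mul0mx.
  move=> Z; have := congr1 (fun M : 'M[F]_(1, 1) => M 0 0) (congr1 (mulmx^~ (adj r)) Z).
  by rewrite -row_mul mul0mx !mxE.
set al := a 0 0 in a0.
have Bw : forall k i, (B *m delta_mx k 0 *m adj a) i 0 = cj al * B i k.
  move=> k i; rewrite [a]mx11_scalar adj_scalar mul_mx_scalar -colE [LHS]mxE [(col k B) i 0]mxE -/al; done.
rewrite -eA.
case: c1 => [[w10 [s [hs1 ed1]]] | [k1 [ew1 Zk1 ed1]]];
  case: c2 => [[w20 [t [ht2 ed2]]] | [k2 [ew2 Zk2 ed2]]].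
- rewrite w10 w20 ed1 ed2; congr block_mx.
  have hAr : A1 *m adj r = 0.
    move: edl; rewrite w10 w20 mulmx0 mul0mx add0r => h.
    by rewrite -(mulKmx UB (A1 *m adj r)) [B *m (A1 *m _)]mulmxA h mulmx0.
  move: eul; rewrite w10 ed1 ed2 mulmx0 addr0 adj0 mulmx0 add0r -[r *m A1 *m _]mulmxA hAr mulmx0 addr0.
  rewrite [a]mx11_scalar adj_scalar -!scalar_mxM -/al => /matrixP /(_ 0 0).
  rewrite !mxE eqxx !mulr1n => h.
  congr scalar_mx; apply: (@sign_eq _ s t (al * cj al)) => //; first exact: cjN.
  by rewrite -h; ring.
- exfalso; move: edl; rewrite w10 ew2 mulmx0 mul0mx add0r => /matrixP /(_ k2 0).
  by rewrite key // !mxE !eqxx => /esym/eqP; rewrite oner_eq0.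
- exfalso; move: edl; rewrite ew1 w20 => /matrixP /(_ k1 0).
  rewrite mxE Bw key // addr0 => h.
  have : cj al * B k1 k1 == 0 by rewrite h mxE.
  by rewrite mulf_eq0 cj_eq0 (negbTE a0) (negbTE (borel_diag k1 bB)).
- have ek : k1 = k2.
    apply/eqP; move: edl; rewrite ew1 ew2 => /matrixP /(_ k1 0).
    rewrite mxE Bw key // addr0 => h.
    have : cj al * B k1 k1 = ((k1 == k2) && true)%:R by rewrite h mxE.
    rewrite andbT; case: eqP => // _ /eqP.
    by rewrite mulf_eq0 cj_eq0 (negbTE a0) (negbTE (borel_diag k1 bB)).
  by rewrite ew1 ew2 ed1 ed2 ek.
Qed.
End Gen.

Lemma spip_of_SPI (F : numFieldType) n (tau : 'M[int]_n) :
  SPIplus tau -> spip (intmx F tau).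
Proof.
case=> [[[hv [hr hc]] hs] hp]; split.
- move=> i j; rewrite mxE; have := hv i j; rewrite !inE => /or3P [] /eqP e; rewrite e.
  + case: (eqVneq i j) => [-> | nij]; first by rewrite rmorphN1; auto.
    by have := hp i j nij; rewrite e.
  + by rewrite rmorph0; auto.
  + by rewrite rmorph1; auto.
- by move=> i j j'; rewrite !mxE !intr_eq0; exact: hr.
- by rewrite /intmx map_trmx hs.
Qed.

Lemma intmx_inj (F : numFieldType) n (t1 t2 : 'M[int]_n) :
  intmx F t1 = intmx F t2 -> t1 = t2.
Proof.
move/matrixP => h; apply/matrixP => i j; have := h i j; rewrite !mxE; exact: intr_inj.
Qed.

Lemma SPI_of_spip (F : numFieldType) n (T : 'M[F]_n) :
  spip T -> exists tau, SPIplus tau /\ intmx F tau = T.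
Proof.
move=> sT; have sT' := sT; case: sT' => [hv hr hs].
have m11 : (-1 == 1 :> F) = false.
  by apply/negbTE; rewrite -subr_eq0 -opprD oppr_eq0 -mulr2n pnatr_eq0.
pose tau : 'M[int]_n := \matrix_(i, j) (if T i j == 1 then 1 else if T i j == -1 then -1 else 0).
have Etau : intmx F tau = T.
  apply/matrixP => i j; rewrite !mxE.
  case: (hv i j) => [->|[->|[_ ->]]].
  - by rewrite eq_sym oner_eq0 eq_sym oppr_eq0 oner_eq0 rmorph0.
  - by rewrite eqxx rmorph1.
  - by rewrite m11 eqxx rmorphN1.
have Et : forall i j, (tau i j)%:~R = T i j.
  by move=> i j; have := congr1 (fun M : 'M[F]_n => M i j) Etau; rewrite [in LHS]mxE.
exists tau; split => //; split; first split.
- split.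
    move=> i j; rewrite !mxE; case: ifP => _; first by []. case: ifP => _; by [].
  split.
    by move=> i j j'; rewrite -!(intr_eq0 F) !Et; exact: hr.
  by move=> i i' j; rewrite -!(intr_eq0 F) !Et; exact: spip_col.
- by apply: (@intmx_inj F); rewrite /intmx -map_trmx -/(intmx F tau) Etau hs.
- move=> i j nij; case: (hv i j) => [e|[e|[e _]]]; last by rewrite e eqxx in nij.
  + by have := Et i j; rewrite e => /eqP; rewrite intr_eq0 => /eqP ->.
  + by have := Et i j; rewrite e -(rmorph1 (intr : int -> F)) => /intr_inj ->.
Qed.

Lemma real_sign (R : rcfType) (a : R) : a != 0 ->
  exists t, t * a * t = 1 \/ t * a * t = -1.
Proof.
move=> a0; exists (Num.sqrt (`|a|^-1)).
rewrite mulrAC -expr2 sqr_sqrtr ?invr_ge0 ?normr_ge0 //.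
case: (ltrgtP a 0) => [an|ap|e]; last by rewrite e eqxx in a0.
- by right; rewrite ltr0_norm // invrN mulNr mulVf // lt_eqF.
- by left; rewrite gtr0_norm // mulVf.
Qed.

Section Inst.
Variable R : realType.

Lemma cK : involutive (@conjc R). Proof. exact: conjcK. Qed.

Lemma cN (x : R[i]) : x != 0 -> 0 < x * conjc x.
Proof. by move=> x0; rewrite -sqr_normc exprn_gt0 // normr_gt0. Qed.

Lemma cS (x : R[i]) : conjc x = x -> x != 0 ->
  exists s, s * x * conjc s = 1 \/ s * x * conjc s = -1.
Proof.
case: x => a b /= hx x0.
have b0 : b = 0 by case: hx => hb; lra.
subst b.
have a0 : a != 0 by apply: contraNneq x0 => ->.
have [t ht] := real_sign a0.
exists (t%:C)%C; rewrite conjc_real.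
have -> : (a +i* 0)%C = (a%:C)%C by [].
rewrite -!rmorphM; case: ht => ->; [left | right]; rewrite ?rmorph1 ?rmorphN1 //.
Qed.

Lemma rK : involutive (idfun : {rmorphism R -> R}). Proof. by []. Qed.

Lemma rN (x : R) : x != 0 -> 0 < x * (idfun : {rmorphism R -> R}) x.
Proof. by move=> x0; rewrite /= lt0r mulf_neq0 // -expr2 sqr_ge0. Qed.

Lemma rS (x : R) : (idfun : {rmorphism R -> R}) x = x -> x != 0 ->
  exists s, s * x * (idfun : {rmorphism R -> R}) s = 1 \/ s * x * (idfun : {rmorphism R -> R}) s = -1.
Proof. by move=> _ x0; exact: real_sign. Qed.

Lemma adj_id m n (A : 'M[R]_(m, n)) : adj (idfun : {rmorphism R -> R}) A = A^T.
Proof. by apply/matrixP => i j; rewrite !mxE. Qed.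
End Inst.

Theorem proposition3p14 (R : realType) (m : nat) :
  ((forall tau : 'M[int]_m, SPIplus tau -> is_hermitianC (intmx R[i] tau)) /\
   (forall z : 'M[R[i]]_m, is_hermitianC z ->
      exists tau : 'M[int]_m, SPIplus tau /\ same_orbitC (intmx R[i] tau) z) /\
   (forall tau1 tau2 : 'M[int]_m, SPIplus tau1 -> SPIplus tau2 ->
      same_orbitC (intmx R[i] tau1) (intmx R[i] tau2) -> tau1 = tau2))
  /\
  ((forall tau : 'M[int]_m, SPIplus tau -> real_symmetric (intmx R tau)) /\
   (forall z : 'M[R]_m, real_symmetric z ->
      exists tau : 'M[int]_m, SPIplus tau /\ same_orbitR (intmx R tau) z) /\
   (forall tau1 tau2 : 'M[int]_m, SPIplus tau1 -> SPIplus tau2 ->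
      same_orbitR (intmx R tau1) (intmx R tau2) -> tau1 = tau2)).
Proof.
pose cj : {rmorphism R[i] -> R[i]} := conjc.
pose rj : {rmorphism R -> R} := idfun.
split; split; [|split| |split].
- move=> tau h; exact: (spip_adj cj (spip_of_SPI _ h)).
- move=> z hz; have [T [sT cT]] := exist_red (@cK R) (@cS R) (hz : adj cj z = z).
  have [tau [htau Et]] := SPI_of_spip sT.
  by exists tau; split => //; rewrite Et; exact: cong_sym cT.
- move=> t1 t2 h1 h2 [b [bb E]]; apply: (@intmx_inj R[i]).
  exact: (uniq_red (@cK R) (@cN R) bb (spip_of_SPI _ h1) (spip_of_SPI _ h2) E).
- move=> tau h; rewrite /real_symmetric -(adj_id (R := R)).
  exact: (spip_adj rj (spip_of_SPI _ h)).
- move=> z hz.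
  have hz' : adj rj z = z by rewrite adj_id.
  have [T [sT cT]] := exist_red (@rK R) (@rS R) hz'.
  have [tau [htau Et]] := SPI_of_spip sT.
  exists tau; split => //; rewrite Et.
  have [b [bb E]] := cong_sym cT; exists b; split => //.
  by rewrite /actR -adj_id.
- move=> t1 t2 h1 h2 [b [bb E]]; apply: (@intmx_inj R).
  apply: (uniq_red (@rK R) (@rN R) bb (spip_of_SPI _ h1) (spip_of_SPI _ h2)).
  by rewrite adj_id.
Qed.
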